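(* Let $L$ be a limit group over free products with set of elliptics $E_L$. (i) Let $u_1,u_2,u_3$ be nontrivial elements of $L$ such that at least one of them is not in $E_L$, and $[u_1,u_2]=1$, $[u_1,u_3]=1$. Then none of $u_1,u_2,u_3$ lies in $E_L$ and $[u_2,u_3]=1$. (ii) Let $A<L$ be a nontrivial abelian subgroup not contained in $E_L$. Then $A$ is contained in a unique maximal abelian subgroup of $L$, namely its centralizer $C(A)$, and $C(A)\cap E_L=\{1\}$. (iii) With $A$ as in (ii), $C(A)$ has index at most 2 in the normalizer $N(A)$; for every $\ell\in L\setminus N(A)$, $\ell C(A)\ell^{-1}\cap A=\{1\}$ (so $C(A)$ is almost malnormal); and if $[N(A):C(A)]=2$ then $N(A)$ is generated by $C(A)$ and an element of order 2 lying in $E_L$ that conjugates every element of $C(A)$ to its inverse.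
   Context: An element of a free product $A*B$ is elliptic if it lies in a conjugate of $A$ or of $B$. For a finitely generated group $G$ and groups $A_n,B_n$, a sequence of homomorphisms $h_n:G\to A_n*B_n$ is convergent if for every $g\in G$: either $h_n(g)=1$ for all large $n$ or $h_n(g)\ne1$ for all large $n$; and either $h_n(g)$ is elliptic for all large $n$ or non-elliptic for all large $n$. Its stable kernel is $K=\{g: h_n(g)=1\text{ for all large }n\}$; $L=G/K$ (with quotient $\eta$) is called a limit group over free products, and its set of elliptics is $E_L=\{\eta(g): h_n(g)\text{ elliptic for all large }n\}$. *)

(* Defs.v *)
From mathcomp Require Import all_boot.
Set Implicit Arguments.
Unset Strict Implicit.
Unset Printing Implicit Defensive.
Local Open Scope group_scope.

Definition group_hom (G H : groupType) (f : G -> H) : Prop :=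
  forall x y : G, f (x * y) = f x * f y.

Inductive generated (G : groupType) (S : G -> Prop) : G -> Prop :=
  | gen_base x : S x -> generated S x
  | gen_one : generated S 1
  | gen_mul x y : generated S x -> generated S y -> generated S (x * y)
  | gen_inv x : generated S x -> generated S x^-1.

Definition finitely_generated (G : groupType) : Prop :=
  exists s : seq G, forall g : G, generated (fun x => x \in s) g.

Definition is_subgroup (G : groupType) (H : G -> Prop) : Prop :=
  H 1 /\ (forall x y, H x -> H y -> H (x * y)) /\ (forall x, H x -> H x^-1).

Definition abelian_pred (G : groupType) (H : G -> Prop) : Prop :=
  forall x y, H x -> H y -> x * y = y * x.

Definition subset_pred (G : groupType) (H K : G -> Prop) : Prop :=
  forall x, H x -> K x.

Definition max_abelian (G : groupType) (M : G -> Prop) : Prop :=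
  is_subgroup M /\ abelian_pred M /\
  (forall M' : G -> Prop, is_subgroup M' -> abelian_pred M' ->
     subset_pred M M' -> subset_pred M' M).

Definition centralizer (G : groupType) (A : G -> Prop) : G -> Prop :=
  fun x => forall a, A a -> x * a = a * x.

Definition normalizer (G : groupType) (A : G -> Prop) : G -> Prop :=
  fun x => forall a, A a <-> A (x * a * x^-1).

(* [N : C] <= 2, for C a subgroup of N: among any three elements of N,
   two lie in the same left coset of C. *)
Definition index_le2 (G : groupType) (C N : G -> Prop) : Prop :=
  forall x y z, N x -> N y -> N z ->
    C (x^-1 * y) \/ C (x^-1 * z) \/ C (y^-1 * z).

Section FreeProduct.
Variables (A B P : groupType) (iA : A -> P) (iB : B -> P).

Definition letter_ok (c : A + B) : bool :=
  match c with inl a => a != 1 | inr b => b != 1 end.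

Definition same_factor (c d : A + B) : bool :=
  match c, d with
  | inl _, inl _ => true
  | inr _, inr _ => true
  | _, _ => false
  end.

Definition reduced_word (w : seq (A + B)) : bool :=
  all letter_ok w && sorted (fun c d => ~~ same_factor c d) w.

Definition eval_word (w : seq (A + B)) : P :=
  foldr (fun c acc => (match c with inl a => iA a | inr b => iB b end) * acc)
        1 w.

(* P is the free product A * B with factor maps iA, iB: iA, iB are
   homomorphisms and every element of P is the value of a unique reduced word *)
Definition is_free_product : Prop :=
  group_hom iA /\ group_hom iB /\
  (forall p : P, exists! w : seq (A + B), reduced_word w /\ eval_word w = p).

Definition elliptic (p : P) : Prop :=
  exists g : P, (exists a : A, p = g * iA a * g^-1) \/
                (exists b : B, p = g * iB b * g^-1).

End FreeProduct.

Definition eventually (Q : nat -> Prop) : Prop :=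
  exists N, forall n, (N <= n)%N -> Q n.

Section Limit.
Variables (G : groupType) (FA FB P : nat -> groupType)
  (iA : forall n, FA n -> P n) (iB : forall n, FB n -> P n)
  (h : forall n, G -> P n).

Definition convergent : Prop :=
  forall g : G,
    (eventually (fun n => h n g = 1) \/ eventually (fun n => h n g <> 1)) /\
    (eventually (fun n => elliptic (@iA n) (@iB n) (@h n g)) \/
     eventually (fun n => ~ elliptic (@iA n) (@iB n) (@h n g))).

Definition stable_kernel (g : G) : Prop := eventually (fun n => h n g = 1).

Definition elliptics (L : groupType) (eta : G -> L) (x : L) : Prop :=
  exists g : G, eta g = x /\
    eventually (fun n => elliptic (@iA n) (@iB n) (@h n g)).

End Limit.

(* Main.v *)
Require Import Defs.
From mathcomp Require Import all_boot.
From Stdlib Require Import Classical.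
Set Implicit Arguments.
Unset Strict Implicit.
Unset Printing Implicit Defensive.
Local Open Scope group_scope.

Section GroupFacts.
Variable G : groupType.
Implicit Types x y z g : G.

Definition cj g x := g * x * g^-1.

Lemma cjM g x y : cj g (x * y) = cj g x * cj g y.
Proof. by rewrite /cj !mulgA mulgVK. Qed.
Lemma cjV g x : cj g x^-1 = (cj g x)^-1.
Proof. by rewrite /cj !invgM invgK mulgA. Qed.
Lemma cj1 g : cj g 1 = 1.
Proof. by rewrite /cj mulg1 mulgV. Qed.
Lemma cjK g x : cj g^-1 (cj g x) = x.
Proof. by rewrite /cj invgK !mulgA mulVg mul1g mulgVK. Qed.
Lemma cjKV g x : cj g (cj g^-1 x) = x.
Proof. by rewrite -{1}(invgK g) cjK. Qed.
Lemma cjJ g h x : cj g (cj h x) = cj (g * h) x.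
Proof. by rewrite /cj invgM !mulgA. Qed.
Lemma cj_inj g x y : cj g x = cj g y -> x = y.
Proof. by move=> E; rewrite -(cjK g x) E cjK. Qed.
Lemma cj_comm g x y : commute x y -> commute (cj g x) (cj g y).
Proof. by rewrite /commute -!cjM => ->. Qed.
Lemma cj_commV g x y : commute (cj g x) (cj g y) -> commute x y.
Proof. by move=> /(cj_comm g^-1); rewrite !cjK. Qed.
Lemma cjX g x k : cj g (x ^+ k) = (cj g x) ^+ k.
Proof. elim: k => [|k IH]; first by rewrite !expg0 cj1. by rewrite !expgS cjM IH. Qed.

Lemma eq_invP x y : x * y = 1 -> y = x^-1.
Proof. by move=> E; rewrite -(mulKg x y) E mulg1. Qed.

Lemma commute_inv x y : commute x y -> commute x^-1 y.
Proof. by move=> C; apply: commute_sym; apply: commuteV; apply: commute_sym. Qed.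

End GroupFacts.


Section FreeProd.
Variables (A B P : groupType) (iA : A -> P) (iB : B -> P).
Hypothesis Hfree : is_free_product iA iB.

Notation word := (seq (A + B)).
Notation ev := (eval_word iA iB).
Notation red := (@reduced_word A B).

Definition lv (c : A + B) : P := match c with inl a => iA a | inr b => iB b end.

Lemma ev_cons c w : ev (c :: w) = lv c * ev w.
Proof. by []. Qed.
Lemma ev_nil : ev [::] = 1. Proof. by []. Qed.
Lemma ev_cat u v : ev (u ++ v) = ev u * ev v.
Proof. elim: u => [|c u IH] /=; first by rewrite mul1g. by rewrite IH mulgA. Qed.

Lemma homA : group_hom iA. Proof. by case: Hfree. Qed.
Lemma homB : group_hom iB. Proof. by case: Hfree => _ []. Qed.

Lemma hom1 (X Y : groupType) (f : X -> Y) : group_hom f -> f 1 = 1.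
Proof. move=> H; apply/esym/(mulgI (f 1)); by rewrite -H !mulg1. Qed.
Lemma homV (X Y : groupType) (f : X -> Y) : group_hom f -> forall x, f x^-1 = (f x)^-1.
Proof. move=> H x; apply: eq_invP; by rewrite -H mulgV hom1. Qed.
Lemma homX (X Y : groupType) (f : X -> Y) : group_hom f -> forall x k, f (x ^+ k) = (f x) ^+ k.
Proof. move=> H x; elim=> [|k IH]; first by rewrite !expg0 hom1. by rewrite !expgS H IH. Qed.

Definition isA (c : A + B) : bool := if c is inl _ then true else false.

Lemma same_factorE c d : same_factor c d = (isA c == isA d).
Proof. by case: c; case: d. Qed.

Definition hA (w : word) : bool := if w is c :: _ then isA c else false.
Definition lA (w : word) : bool := if w is c :: w' then isA (last c w') else false.

Definition jok (u v : word) : bool :=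
  (u == [::]) || (v == [::]) || (lA u != hA v).

Lemma red_cons c w : red (c :: w) = [&& letter_ok c, red w & (w == [::]) || (isA c != hA w)].
Proof.
rewrite /reduced_word /=.
case: w => [|d w] /=; first by rewrite !andbT.
rewrite same_factorE.
by case: (letter_ok c); case: (letter_ok d); case: (all _ w); case: (path _ d w);
   case: (isA c == isA d).
Qed.

Lemma red_cat u v : red (u ++ v) = [&& red u, red v & jok u v].
Proof.
elim: u => [|c u IH]; first by rewrite /= /jok eqxx /= andbT.
rewrite cat_cons red_cons IH red_cons.
case: u IH => [|d u] IH /=.
  by case: v {IH} => [|e v] //=; rewrite /jok /= ?andbT.
rewrite /jok /=.
by case: (letter_ok c); case: (red (d :: u)); case: (red v); case: (isA c != isA d);
   rewrite ?andbT ?andbF.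
Qed.

Lemma nf_ex (p : P) : exists w : word, red w && (ev w == p).
Proof.
case: Hfree => _ [_ /(_ p) [w [[Hr He] _]]]. exists w. by rewrite Hr He eqxx.
Qed.

Definition nf (p : P) : word := xchoose (nf_ex p).

Lemma nf_red p : red (nf p).
Proof. by case/andP: (xchooseP (nf_ex p)). Qed.
Lemma nf_ev p : ev (nf p) = p.
Proof. by case/andP: (xchooseP (nf_ex p)) => _ /eqP. Qed.
Lemma nfE u : red u -> nf (ev u) = u.
Proof.
move=> Hu; case: Hfree => _ [_ /(_ (ev u)) [w [_ U]]].
have E1 := U u (conj Hu erefl).
have E2 := U _ (conj (nf_red (ev u)) (nf_ev (ev u))).
by rewrite -E2 E1.
Qed.
Lemma nf_inj p q : nf p = nf q -> p = q.
Proof. by move=> E; rewrite -(nf_ev p) E nf_ev. Qed.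
Lemma nf1 : nf 1 = [::].
Proof. by rewrite -ev_nil nfE. Qed.
Lemma nf_eq1 p : (nf p == [::]) = (p == 1).
Proof.
apply/eqP/eqP => [E|->]; last exact: nf1.
by rewrite -(nf_ev p) E.
Qed.

Definition len p := size (nf p).

Lemma nf_mul p q : jok (nf p) (nf q) -> nf (p * q) = nf p ++ nf q.
Proof.
move=> J; rewrite -{1}(nf_ev p) -{1}(nf_ev q) -ev_cat nfE //.
by rewrite red_cat !nf_red J.
Qed.

Definition cinv (c : A + B) : A + B :=
  match c with inl a => inl a^-1 | inr b => inr b^-1 end.
Definition winv (w : word) : word := rev (map cinv w).

Lemma lv_cinv c : lv (cinv c) = (lv c)^-1.
Proof. case: c => x /=; [exact: (homV homA x) | exact: (homV homB x)]. Qed.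
Lemma isA_cinv c : isA (cinv c) = isA c. Proof. by case: c. Qed.
Lemma ok_cinv c : letter_ok (cinv c) = letter_ok c.
Proof. by case: c => x /=; rewrite invg_eq1. Qed.

Lemma winv_cons c w : winv (c :: w) = winv w ++ [:: cinv c].
Proof. by rewrite /winv /= rev_cons cats1. Qed.
Lemma size_winv w : size (winv w) = size w.
Proof. by rewrite /winv size_rev size_map. Qed.

Lemma ev_winv w : ev (winv w) = (ev w)^-1.
Proof.
elim: w => [|c w IH]; first by rewrite /= invg1.
by rewrite winv_cons ev_cat IH ev_cons ev_nil mulg1 lv_cinv ev_cons invgM.
Qed.

Lemma hA_winv w : hA (winv w) = lA w.
Proof.
elim/last_ind: w => [|w c _] //.
rewrite /winv map_rcons rev_rcons /= isA_cinv.
by case: w => //= d w; rewrite last_rcons.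
Qed.

Lemma lA_winv w : lA (winv w) = hA w.
Proof.
case: w => [|c w] //; rewrite winv_cons.
case E: (winv w) => [|d u] /=; first by rewrite isA_cinv.
by rewrite last_cat /= isA_cinv.
Qed.

Lemma red_winv w : red (winv w) = red w.
Proof.
elim: w => [|c w IH] //.
rewrite winv_cons red_cat IH (red_cons c w) red_cons ok_cinv /=.
case: w {IH} => [|d w] /=; first by rewrite /jok /= !andbT.
rewrite /jok /= orbF -/(winv (d :: w)) lA_winv isA_cinv /=.
case E: (winv (d :: w)) => [|e u]; first by move: (size_winv (d :: w)); rewrite E.
rewrite /=.
by case: (letter_ok c); case: (red _); case: (isA c); case: (isA d).
Qed.

Lemma nf_inv p : nf p^-1 = winv (nf p).
Proof. by rewrite -{1}(nf_ev p) -ev_winv nfE // red_winv nf_red. Qed.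
Lemma len_inv p : len p^-1 = len p.
Proof. by rewrite /len nf_inv size_winv. Qed.



Lemma rcons_ex (T : Type) (x : T) s : exists u c, x :: s = rcons u c.
Proof.
elim: s x => [|y s IH] x; first by exists [::], x.
by have [u [c ->]] := IH y; exists (x :: u), c.
Qed.

Lemma ok_lv c : letter_ok c = false -> lv c = 1.
Proof.
case: c => x /= /negbFE /eqP ->; [exact: hom1 homA | exact: hom1 homB].
Qed.

Lemma combine c d : isA c = isA d -> exists e, lv c * lv d = lv e /\ isA e = isA c.
Proof.
case: c => x; case: d => y //= _.
- by exists (inl (x * y)); rewrite /= homA.
- by exists (inr (x * y)); rewrite /= homB.
Qed.

Lemma len_ev u : red u -> len (ev u) = size u.
Proof. by move=> Hu; rewrite /len nfE. Qed.

Lemma len_lv c : len (lv c) <= 1.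
Proof.
case E: (letter_ok c).
  have Hr : red [:: c] by rewrite red_cons E.
  by rewrite -(mulg1 (lv c)) -[lv c * 1]/(ev [:: c]) len_ev.
by rewrite ok_lv // /len nf1.
Qed.

Lemma len_lvM c r : len (lv c * r) <= (len r).+1.
Proof.
case E: (letter_ok c); last by rewrite ok_lv // mul1g.
case En: (nf r) => [|d w].
  rewrite -(nf_ev r) En ev_nil mulg1; exact: leq_trans (len_lv c) _.
have Hr := nf_red r; rewrite En red_cons in Hr; case/and3P: Hr => Hd Hw Hj.
have Hrr : len r = (size w).+1 by rewrite /len En.
rewrite Hrr.
case Ecd: (isA c == isA d).
  have [e [Ee He]] := combine (eqP Ecd).
  rewrite -(nf_ev r) En ev_cons mulgA Ee.
  case Eo: (letter_ok e).
    have Hr : red (e :: w).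
      rewrite red_cons Eo Hw /=.
      by case: w Hj {Hw En Hrr} => //= f w; rewrite He (eqP Ecd).
    by rewrite -ev_cons len_ev.
  by rewrite ok_lv // mul1g len_ev // leqW.
have Hr : red (c :: d :: w) by rewrite red_cons E /= Ecd /= andbT -En nf_red.
by rewrite -(nf_ev r) En -ev_cons len_ev.
Qed.

Lemma len_evM u q : len (ev u * q) <= size u + len q.
Proof.
elim: u q => [|c u IH] q /=; first by rewrite mul1g.
rewrite -mulgA; apply: leq_trans (len_lvM _ _) _; by rewrite ltnS IH.
Qed.

Lemma len_evle u : len (ev u) <= size u.
Proof. by have := len_evM u 1; rewrite mulg1 /len nf1 addn0. Qed.

Lemma len_mul p q : len (p * q) <= len p + len q.
Proof. by rewrite -{1}(nf_ev p) len_evM. Qed.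

Lemma len_mul_jok p q : jok (nf p) (nf q) -> len (p * q) = len p + len q.
Proof. by move=> J; rewrite /len nf_mul // size_cat. Qed.

Lemma len_merge p q : nf p != [::] -> nf q != [::] -> lA (nf p) = hA (nf q) ->
  len (p * q) < len p + len q.
Proof.
move=> Hp Hq; case Eq: (nf q) Hq => [|d v] // _.
case Ep0: (nf p) Hp => [|c0 u0] // _.
have [u [c Ep]] := rcons_ex c0 u0; rewrite Ep in Ep0.
have Hlc : lA (rcons u c) = isA c by case: u {Ep Ep0} => //= f u; rewrite last_rcons.
rewrite Ep Hlc /= => Hcd.
have [e [Ee _]] := combine Hcd.
have -> : p * q = ev u * (lv e * ev v).
  by rewrite -(nf_ev p) -(nf_ev q) Ep0 Eq -cats1 ev_cat !ev_cons ev_nil mulg1 -!mulgA (mulgA (lv c)) Ee.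
rewrite /len Ep0 Eq size_rcons /=.
apply: leq_ltn_trans (len_evM _ _) _.
rewrite addSn ltnS leq_add2l; apply: leq_trans (len_lvM _ _) _.
by rewrite ltnS len_evle.
Qed.

Definition cycred (w : word) := (w != [::]) && (hA w != lA w).
Definition cyc p := cycred (nf p).

Lemma hA_cat u v : u != [::] -> hA (u ++ v) = hA u.
Proof. by case: u. Qed.
Lemma lA_cat u v : v != [::] -> lA (u ++ v) = lA v.
Proof.
case: v => // d v _; case: u => [|c u] //=.
by rewrite last_cat.
Qed.

Fixpoint wpow (w : word) k := if k is k'.+1 then w ++ wpow w k' else [::].

Lemma nf_pow x k : cyc x -> nf (x ^+ k) = wpow (nf x) k.
Proof.
move=> /andP [Hne Hhl]; elim: k => [|k IH]; first by rewrite expg0 nf1.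
rewrite expgS nf_mul IH //.
rewrite /jok; case: k {IH} => [|k] /=; first by rewrite orbT.
by rewrite hA_cat // [lA _ == _]eq_sym Hhl !orbT.
Qed.

Lemma size_wpow w k : size (wpow w k) = (k * size w)%N.
Proof. by elim: k => //= k IH; rewrite size_cat IH mulSn. Qed.

Lemma len_pow x k : cyc x -> len (x ^+ k) = (k * len x)%N.
Proof. by move=> H; rewrite /len nf_pow // size_wpow. Qed.

Lemma cyc_inv x : cyc x -> cyc x^-1.
Proof.
rewrite /cyc /cycred nf_inv hA_winv lA_winv -!size_eq0 size_winv.
by case/andP => -> /=; rewrite eq_sym.
Qed.

Lemma cyc_ne1 x : cyc x -> x != 1.
Proof. by case/andP; rewrite nf_eq1. Qed.

Notation ell := (elliptic iA iB).

Lemma ellP p : ell p <-> exists g c, p = cj g (lv c).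
Proof.
split.
  by case=> g [[a ->]|[b ->]]; [exists g, (inl a) | exists g, (inr b)].
by case=> g [[a|b] ->]; exists g; [left; exists a | right; exists b].
Qed.

Lemma ell_cj g p : ell p -> ell (cj g p).
Proof. by case/ellP => h [c ->]; apply/ellP; exists (g * h), c; rewrite cjJ. Qed.
Lemma ell_cjV g p : ell (cj g p) -> ell p.
Proof. by move/(ell_cj g^-1); rewrite cjK. Qed.
Lemma ell_inv p : ell p -> ell p^-1.
Proof. by case/ellP => h [c ->]; apply/ellP; exists h, (cinv c); rewrite lv_cinv cjV. Qed.
Lemma ell_small p : len p <= 1 -> ell p.
Proof.
rewrite /len; case E: (nf p) => [|c [|d w]] //= _; apply/ellP.
  exists 1, (inl 1); rewrite /cj /= (hom1 homA) !mul1g invg1.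
  by apply/eqP; rewrite -nf_eq1 E.
exists 1, c; rewrite /cj mul1g invg1 mulg1.
by rewrite -(nf_ev p) E /= mulg1.
Qed.
Lemma ell1 : ell 1.
Proof. by apply: ell_small; rewrite /len nf1. Qed.

Lemma len_lvX c k : len ((lv c) ^+ k) <= 1.
Proof.
case: c => x.
  by rewrite -(homX homA) -[iA _]/(lv (inl _)) len_lv.
by rewrite -(homX homB) -[iB _]/(lv (inr _)) len_lv.
Qed.

Lemma cyc_nell x : cyc x -> ~ ell x.
Proof.
move=> Hc /ellP [g [c Ex]].
have Hl : 0 < len x by rewrite lt0n size_eq0; case/andP: Hc.
set k := (len g).*2.+2.
have E := len_pow k Hc.
have Ex' : x ^+ k = g * lv c ^+ k * g^-1 by rewrite Ex -cjX.
rewrite Ex' in E.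
have H1 : len (g * lv c ^+ k * g^-1) <= len g + 1 + len g.
  apply: leq_trans (len_mul _ _) _; rewrite len_inv leq_add2r.
  by apply: leq_trans (len_mul _ _) _; rewrite leq_add2l len_lvX.
move: H1; rewrite E.
have : k <= (k * len x)%N by rewrite leq_pmulr.
rewrite /k -addnn => H2 H3.
have := leq_trans H2 H3; by rewrite addn1 addSn ltnn.
Qed.

Lemma cj1g (p : P) : cj 1 p = p.
Proof. by rewrite /cj mul1g invg1 mulg1. Qed.

Lemma nell_cyc p : ~ ell p -> exists g x, cyc x /\ p = cj g x.
Proof.
move: {2}(len p) (leqnn (len p)) => n; elim: n p => [|n IH] p Hn Hp.
  by case: Hp; apply: ell_small; apply: leq_trans Hn _.
case Ecyc: (cyc p); first by exists 1, p; rewrite cj1g.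
case E: (nf p) => [|c rest].
  by case: Hp; apply: ell_small; rewrite /len E.
case Er0: rest => [|c1 r1].
  by case: Hp; apply: ell_small; rewrite /len E Er0.
have [mid [d Er]] := rcons_ex c1 r1; rewrite -Er0 in Er.
move: Ecyc; rewrite /cyc /cycred E Er /= last_rcons => /negbT.
rewrite negbK => /eqP Hcd.
have [e [Ee _]] := combine (esym Hcd).
set p' := cj (lv c)^-1 p.
have Hp' : p' = ev mid * lv e.
  rewrite /p' /cj invgK -(nf_ev p) E Er ev_cons -cats1 ev_cat ev_cons ev_nil mulg1.
  by rewrite !mulgA mulVg mul1g -mulgA Ee.
have Hlen : len p' <= n.
  rewrite Hp'; apply: leq_trans (len_evM _ _) _.
  move: Hn; rewrite /len E Er /= size_rcons => Hn.
  apply: leq_trans (leq_add (leqnn _) (len_lv e)) _; by rewrite addn1.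
have Hnp' : ~ ell p' by move=> /(ell_cj (lv c)); rewrite /p' cjKV.
have [g [x [Hx Hg]]] := IH p' Hlen Hnp'.
exists (lv c * g), x; split => //.
by rewrite -cjJ -Hg /p' cjKV.
Qed.



Lemma bool3 (a b c : bool) : a != b -> (c == a) = false -> c = b.
Proof. by case: a; case: b; case: c. Qed.

Definition good x z := [&& nf z != [::], hA (nf z) == hA (nf x) & lA (nf z) == lA (nf x)].

Lemma comm_good x y : cyc x -> y != 1 -> commute x y -> good x y \/ good x y^-1.
Proof.
move=> /andP [Hxne Hx] Hy C.
have Hyne : nf y != [::] by rewrite nf_eq1.
case Eh: (hA (nf y) == hA (nf x)); case El: (lA (nf y) == lA (nf x)).
- by left; rewrite /good Hyne Eh El.
- exfalso.
  have Hly : lA (nf y) = hA (nf x) by apply: bool3 El; rewrite eq_sym.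
  have J : jok (nf x) (nf y) by rewrite /jok (eqP Eh) [lA _ == _]eq_sym Hx !orbT.
  have := len_merge Hyne Hxne Hly; rewrite -C len_mul_jok // addnC ltnn //.
- exfalso.
  have Hhy : hA (nf y) = lA (nf x) by apply: bool3 Eh.
  have J : jok (nf y) (nf x) by rewrite /jok (eqP El) [lA _ == _]eq_sym Hx !orbT.
  have := len_merge Hxne Hyne (esym Hhy); rewrite C len_mul_jok // addnC ltnn //.
- right.
  have Hhy : hA (nf y) = lA (nf x) by apply: bool3 Eh.
  have Hly : lA (nf y) = hA (nf x) by apply: bool3 El; rewrite eq_sym.
  rewrite /good nf_inv hA_winv lA_winv Hhy Hly !eqxx !andbT.
  by rewrite -size_eq0 size_winv size_eq0.
Qed.

Lemma good_cyc x z : cyc x -> good x z -> cyc z.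
Proof.
case/andP => _ Hx /and3P [Hz /eqP Eh /eqP El].
by rewrite /cyc /cycred Hz Eh El.
Qed.

Lemma good_word x z : cyc x -> good x z -> commute x z -> nf z ++ nf x = nf x ++ nf z.
Proof.
move=> Hc Hg C; move: (Hc) (Hg) => /andP [Hxne Hx] /and3P [Hz /eqP Eh /eqP El].
rewrite -nf_mul; last by rewrite /jok El [lA _ == _]eq_sym Hx !orbT.
rewrite -nf_mul; last by rewrite /jok Eh [lA _ == _]eq_sym Hx !orbT.
by rewrite C.
Qed.

Lemma good_pick x z : cyc x -> commute x z -> z != 1 ->
  exists z', (z' = z \/ z' = z^-1) /\ good x z' /\ commute x z'.
Proof.
move=> Hc C Hz; case: (comm_good Hc Hz C) => G.
  by exists z; split; [left|].
by exists z^-1; split; [right | split => //; apply: commuteV].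
Qed.

Lemma wpow_comm (a w : word) k : a ++ w = w ++ a -> a ++ wpow w k = wpow w k ++ a.
Proof.
move=> E; elim: k => [|k IH] /=; first by rewrite cats0.
by rewrite catA E -catA IH catA.
Qed.

Lemma WL (a b w : word) : w != [::] -> a ++ w = w ++ a -> b ++ w = w ++ b -> a ++ b = b ++ a.
Proof.
move=> Hw Ea Eb; set k := size a + size b.
have Hk : k <= size (wpow w k).
  by rewrite size_wpow leq_pmulr // lt0n size_eq0.
have E1 : take k (a ++ b ++ wpow w k) = a ++ b by rewrite catA take_size_cat // size_cat.
have E2 : take k (b ++ a ++ wpow w k) = b ++ a by rewrite catA take_size_cat // size_cat addnC.
have F1 : a ++ b ++ wpow w k = wpow w k ++ (a ++ b).
  by rewrite (wpow_comm k Eb) catA (wpow_comm k Ea) -catA.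
have F2 : b ++ a ++ wpow w k = wpow w k ++ (b ++ a).
  by rewrite (wpow_comm k Ea) catA (wpow_comm k Eb) -catA.
by rewrite -E1 -E2 F1 F2 !takel_cat.
Qed.

Lemma comm_invl (a b : P) : commute a b -> commute a^-1 b.
Proof. exact: commute_inv. Qed.
Lemma comm_invr (a b : P) : commute a b -> commute a b^-1.
Proof. exact: commuteV. Qed.

Lemma comm_pm (a b a' b' : P) : (a' = a \/ a' = a^-1) -> (b' = b \/ b' = b^-1) ->
  commute a' b' -> commute a b.
Proof.
move=> [->|->] [->|->] // C.
- by rewrite -(invgK b); apply: comm_invr.
- by rewrite -(invgK a); apply: comm_invl.
- by rewrite -(invgK a) -(invgK b); apply: comm_invl; apply: comm_invr.
Qed.

Lemma FPA p q : ~ ell p -> commute p q -> q != 1 -> ~ ell q.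
Proof.
move=> Hp C Hq; have [g [x [Hx Ep]]] := nell_cyc Hp.
set q0 := cj g^-1 q; have Eq : q = cj g q0 by rewrite cjKV.
have C0 : commute x q0 by apply: (@cj_commV _ g); rewrite -Eq -Ep.
have Hq0 : q0 != 1 by apply: contraNneq Hq => E; rewrite Eq E cj1.
move=> He; have He0 : ell q0 by apply: (@ell_cjV g); rewrite -Eq.
have [z' [Ez [G _]]] := good_pick Hx C0 Hq0.
apply: (cyc_nell (good_cyc Hx G)).
by case: Ez => ->; last apply: ell_inv.
Qed.

Lemma FPB p q r : ~ ell p -> commute p q -> commute p r -> commute q r.
Proof.
move=> Hp Cq Cr; have [g [x [Hx Ep]]] := nell_cyc Hp.
set q0 := cj g^-1 q; have Eq : q = cj g q0 by rewrite cjKV.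
set r0 := cj g^-1 r; have Er : r = cj g r0 by rewrite cjKV.
have Cq0 : commute x q0 by apply: (@cj_commV _ g); rewrite -Eq -Ep.
have Cr0 : commute x r0 by apply: (@cj_commV _ g); rewrite -Er -Ep.
rewrite Eq Er; apply: cj_comm.
case: (eqVneq q0 1) => [->|Hq0]; first by apply: commute_sym; apply: commute1.
case: (eqVneq r0 1) => [->|Hr0]; first by apply: commute1.
have [q' [Eq' [Gq Cq']]] := good_pick Hx Cq0 Hq0.
have [r' [Er' [Gr Cr']]] := good_pick Hx Cr0 Hr0.
apply: (comm_pm Eq' Er').
have W := WL (proj1 (andP Hx)) (good_word Hx Gq Cq') (good_word Hx Gr Cr').
by rewrite /commute -(nf_ev q') -(nf_ev r') -!ev_cat W.
Qed.

Lemma FPH p : ~ ell p -> p * p != 1.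
Proof.
move=> Hp; have [g [x [Hx ->]]] := nell_cyc Hp.
rewrite -cjM; apply/eqP => E.
have E1 : x * x = 1 by apply: (@cj_inj _ g); rewrite E cj1.
have := len_pow 2 Hx; rewrite expg2 E1 /len nf1.
have : 0 < len x by rewrite lt0n size_eq0; case/andP: Hx.
by rewrite /len; case: (size (nf x)).
Qed.

Lemma cj_comm_id (g y : P) : commute g y -> cj g y = y.
Proof. by rewrite /cj => ->; rewrite mulgK. Qed.

Lemma FPR p s : ~ ell p -> s * p * s^-1 = p^-1 -> s * s = 1 /\ ell s.
Proof.
move=> Hp H.
have E1 : s * p = p^-1 * s by rewrite -H mulgVK.
have E2' : cj s p^-1 = p by rewrite cjV /cj H invgK.
have E2 : s * p^-1 = p * s by rewrite -{2}E2' /cj mulgVK.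
have C : commute p (s * s).
  by rewrite /commute; apply/esym; rewrite -mulgA E1 mulgA E2 -mulgA.
have Hss : s * s = 1.
  apply/eqP; apply: contraT => Hs.
  have Hn := FPA Hp C Hs.
  have Cs : commute (s * s) s by rewrite /commute mulgA.
  have Cps : commute s p by apply: (FPB Hn Cs); apply: commute_sym.
  have Ep : p^-1 = p by rewrite -H Cps mulgK.
  by move: (FPH Hp); rewrite -{2}Ep mulgV eqxx.
split => //.
by apply: NNPP => Hs; move: (FPH Hs); rewrite Hss eqxx.
Qed.

Lemma FPC p s q : ~ ell p -> s * p * s^-1 = p^-1 -> commute p q -> s * q * s^-1 = q^-1.
Proof.
move=> Hp H C.
have Ht : (q * s) * p * (q * s)^-1 = p^-1.
  rewrite -[_ * _ * _]/(cj (q * s) p) -cjJ.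
  rewrite [cj s p]H cj_comm_id //; apply: comm_invr; by apply: commute_sym.
have [Hqs _] := FPR Hp Ht.
have [Hs _] := FPR Hp H.
have Es : s^-1 = s by apply/esym; apply: eq_invP.
rewrite Es; apply: eq_invP; rewrite !mulgA in Hqs *; exact: Hqs.
Qed.

Lemma len_cj g u : len (cj g u) <= len g + len u + len g.
Proof.
rewrite /cj; apply: leq_trans (len_mul _ _) _; rewrite len_inv leq_add2r.
exact: len_mul.
Qed.

Lemma arith_aux a b c : ((c.*2.+1) * a <= c.*2 + (c.*2.+1) * b)%N -> a <= b.
Proof.
move=> H; rewrite leqNgt; apply/negP => Hab.
have : ((c.*2.+1) * b.+1 <= (c.*2.+1) * a)%N by rewrite leq_mul2l Hab orbT.
rewrite mulnS => H2; have := leq_trans H2 H.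
by rewrite leq_add2r ltnn.
Qed.

Lemma FPD p y : ~ ell p -> commute (y * p * y^-1) p ->
  y * p * y^-1 = p \/ y * p * y^-1 = p^-1.
Proof.
move=> Hp C; have [g [x [Hx Ep]]] := nell_cyc Hp.
set y0 := g^-1 * y * g.
set z0 := cj y0 x.
have Ez : y * p * y^-1 = cj g z0.
  by rewrite /z0 /y0 -[_ * _ * _]/(cj y p) Ep !cjJ !mulgA mulgV mul1g.
have C0 : commute x z0.
  apply: commute_sym; apply: (@cj_commV _ g); by rewrite -Ez -Ep.
have Hz0 : z0 != 1.
  apply/eqP => E; move: (cyc_ne1 Hx); rewrite -(cjK y0 x) -/z0 E cj1 eqxx //.
have [z' [Ez' [G Cz']]] := good_pick Hx C0 Hz0.
have [x' [Hx' [Ezx Hlx]]] : exists x', cyc x' /\ z' = cj y0 x' /\ len x' = len x.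
  case: Ez' => ->; first by exists x.
  by exists x^-1; rewrite cjV len_inv; split => //; apply: cyc_inv.
have Hz'c := good_cyc Hx G.
have Hlen : len z' = len x.
  set c := len y0; set k := c.*2.+1.
  have L1 := len_pow k Hz'c; have L2 := len_pow k Hx'.
  apply/eqP; rewrite eqn_leq; apply/andP; split.
    apply: (@arith_aux _ _ c); rewrite -L1 -Hlx -L2 Ezx -cjX.
    apply: leq_trans (len_cj _ _) _.
    by rewrite -addnn addnAC addnC.
  apply: (@arith_aux _ _ c); rewrite -L1 -Hlx -L2.
  have -> : x' ^+ k = cj y0^-1 (z' ^+ k) by rewrite Ezx -cjX cjK.
  apply: leq_trans (len_cj _ _) _.
  by rewrite len_inv -addnn addnAC addnC.
have W := good_word Hx G Cz'.
have Ezx' : z' = x.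
  apply: nf_inj.
  have := congr1 (take (size (nf x))) W.
  by rewrite take_size_cat // take_size_cat.
case: Ez' => Ez'; rewrite Ez Ep.
  by left; rewrite -Ez' Ezx'.
by right; rewrite -cjV -Ezx' Ez' invgK.
Qed.

End FreeProd.

Unset Implicit Arguments.

Lemma ev_and (P Q : nat -> Prop) : eventually P -> eventually Q ->
  eventually (fun n => P n /\ Q n).
Proof.
case=> N1 H1 [N2 H2]; exists (maxn N1 N2) => n Hn; split.
  by apply: H1; apply: leq_trans Hn; apply: leq_maxl.
by apply: H2; apply: leq_trans Hn; apply: leq_maxr.
Qed.
Arguments ev_and {P Q} _ _.
Lemma ev_mono (P Q : nat -> Prop) : (forall n, P n -> Q n) -> eventually P -> eventually Q.
Proof. by move=> H [N HN]; exists N => n /HN /H. Qed.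
Arguments ev_mono {P Q} _ _.
Lemma ev_false (P : nat -> Prop) : eventually P -> eventually (fun n => ~ P n) -> False.
Proof. by move=> H1 H2; case: (ev_and H1 H2) => N /(_ N (leqnn N)) []. Qed.
Arguments ev_false {P} _ _.

Section Lim.
Variables (G : groupType) (FA FB P : nat -> groupType)
  (iA : forall n, FA n -> P n) (iB : forall n, FB n -> P n).
Hypothesis Hfree : forall n, is_free_product (iA n) (iB n).
Variables (h : forall n, G -> P n).
Hypothesis Hhom : forall n, group_hom (h n).
Hypothesis Hconv : convergent iA iB h.
Variables (L : groupType) (eta : G -> L).
Hypothesis Heta : group_hom eta.
Hypothesis Hsurj : forall x : L, exists g : G, eta g = x.
Hypothesis Hker : forall g : G, eta g = 1 <-> stable_kernel h g.

Notation E := (elliptics iA iB h eta).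
Definition ell n := elliptic (iA n) (iB n).

Lemma hV n g : h n g^-1 = (h n g)^-1. Proof. exact: homV (Hhom n) g. Qed.
Lemma hM n g1 g2 : h n (g1 * g2) = h n g1 * h n g2. Proof. exact: Hhom. Qed.
Lemma etaV g : eta g^-1 = (eta g)^-1. Proof. exact: homV Heta g. Qed.

Lemma EQ g1 g2 : eta g1 = eta g2 <-> eventually (fun n => h n g1 = h n g2).
Proof.
split => [E12|Hev].
  have : eta (g1^-1 * g2) = 1 by rewrite Heta etaV E12 mulVg.
  case/Hker => N HN; exists N => n /HN; rewrite hM hV => H.
  by apply/esym; rewrite -(invgK (h n g1)); apply: eq_invP.
have : eta (g1^-1 * g2) = 1.
  apply/Hker; apply: ev_mono Hev => n H; by rewrite hM hV H mulVg.
rewrite Heta etaV => H; apply/esym; rewrite -(invgK (eta g1)); exact: eq_invP.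
Qed.

Lemma NT g : eta g <> 1 -> eventually (fun n => h n g <> 1).
Proof.
move=> H; case: (proj1 (Hconv g)) => // Hk.
by case: H; apply/Hker.
Qed.

Lemma NEg g : ~ E (eta g) -> eventually (fun n => ~ ell n (h n g)).
Proof.
move=> H; case: (proj2 (Hconv g)) => // He.
by case: H; exists g.
Qed.

Lemma NEg' g : eventually (fun n => ~ ell n (h n g)) -> ~ E (eta g).
Proof.
move=> Hn [g' [Eg He]].
have /EQ Hq := Eg.
apply: (ev_false _ Hn); move: (ev_and He Hq); apply: ev_mono => n [H1 H2].
by rewrite /ell -H2.
Qed.

Lemma Li u1 u2 : ~ E u1 -> u2 <> 1 -> commute u1 u2 -> ~ E u2.
Proof.
case: (Hsurj u1) => g1 <-; case: (Hsurj u2) => g2 <- H1 H2 C.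
have : eta (g1 * g2) = eta (g2 * g1) by rewrite !Heta.
move/EQ => Hc; apply: (@NEg' g2).
have Hc' : eventually (fun n => commute (h n g1) (h n g2)).
  by move: Hc; apply: ev_mono => n; rewrite !hM.
move: (ev_and (ev_and (NEg _ H1) (NT _ H2)) Hc'); apply: ev_mono => n [[Ha Hb] Hcc].
by apply: (FPA (Hfree n) Ha Hcc); apply/eqP.
Qed.



Lemma CommL g1 g2 : commute (eta g1) (eta g2) <-> eventually (fun n => commute (h n g1) (h n g2)).
Proof.
rewrite /commute -!Heta EQ; split; apply: ev_mono => n; by rewrite !hM.
Qed.

Lemma ConjL gx gb gc : eta gx * eta gb * (eta gx)^-1 = eta gc <->
  eventually (fun n => h n gx * h n gb * (h n gx)^-1 = h n gc).
Proof.
rewrite -etaV -!Heta EQ; split; apply: ev_mono => n; by rewrite !hM hV.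
Qed.

Lemma SqL g : eta g * eta g = 1 <-> eventually (fun n => h n g * h n g = 1).
Proof.
rewrite -Heta -(hom1 Heta) EQ; split; apply: ev_mono => n; by rewrite hM (hom1 (Hhom n)).
Qed.

Lemma Lii u1 u2 u3 : ~ E u1 -> commute u1 u2 -> commute u1 u3 -> commute u2 u3.
Proof.
case: (Hsurj u1) => g1 <-; case: (Hsurj u2) => g2 <-; case: (Hsurj u3) => g3 <-.
move=> H1 /CommL C2 /CommL C3; apply/CommL.
move: (ev_and (ev_and (NEg _ H1) C2) C3); apply: ev_mono => n [[Ha Hb] Hc].
exact: (FPB (Hfree n) Ha Hb Hc).
Qed.

Lemma LD x b : ~ E b -> commute (x * b * x^-1) b -> commute x b \/ x * b * x^-1 = b^-1.
Proof.
case: (Hsurj x) => gx <-; case: (Hsurj b) => gb <- Hb C0.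
have C : eventually (fun n => commute (h n (gx * gb * gx^-1)) (h n gb)).
  by apply/CommL; move: C0; rewrite -etaV -!Heta.
have D : eventually (fun n => h n gx * h n gb * (h n gx)^-1 = h n gb \/
                             h n gx * h n gb * (h n gx)^-1 = (h n gb)^-1).
  move: (ev_and (NEg _ Hb) C); apply: ev_mono => n [Ha Hc].
  apply: (FPD (Hfree n) Ha); by move: Hc; rewrite !hM hV.
set k := gx * gb * gx^-1 * gb^-1.
case: (proj1 (Hconv k)) => Hk.
  left; have : eta k = 1 by apply/Hker.
  rewrite /k !Heta !etaV => /divg1_eq Eb.
  by rewrite /commute -{2}Eb mulgVK.
right; rewrite -[(eta gb)^-1]etaV; apply/ConjL.
move: (ev_and D Hk); apply: ev_mono => n [[E1|E1] Hn]; last by rewrite hV.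
by case: Hn; rewrite /k !hM !hV E1 mulgV.
Qed.

Lemma LC x b c : ~ E b -> x * b * x^-1 = b^-1 -> commute b c -> x * c * x^-1 = c^-1.
Proof.
case: (Hsurj x) => gx <-; case: (Hsurj b) => gb <-; case: (Hsurj c) => gc <- Hb Hi0 /CommL Hc.
have Hi : eventually (fun n => h n gx * h n gb * (h n gx)^-1 = h n gb^-1).
  by apply/ConjL; rewrite etaV.
rewrite -[(eta gc)^-1]etaV; apply/ConjL.
move: (ev_and (ev_and (NEg _ Hb) Hi) Hc); apply: ev_mono => n [[Ha H1] H2].
rewrite hV; apply: (FPC (Hfree n) Ha _ H2); by rewrite H1 hV.
Qed.

Lemma LR x b : ~ E b -> x * b * x^-1 = b^-1 -> x * x = 1 /\ E x.
Proof.
case: (Hsurj x) => gx <-; case: (Hsurj b) => gb <- Hb Hi0.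
have Hi : eventually (fun n => h n gx * h n gb * (h n gx)^-1 = h n gb^-1).
  by apply/ConjL; rewrite etaV.
have R : eventually (fun n => h n gx * h n gx = 1 /\ ell n (h n gx)).
  move: (ev_and (NEg _ Hb) Hi); apply: ev_mono => n [Ha H1].
  apply: (FPR (Hfree n) Ha); by rewrite H1 hV.
split.
  by apply/SqL; move: R; apply: ev_mono => n [].
by exists gx; split => //; move: R; apply: ev_mono => n [].
Qed.



Lemma E1 : E 1.
Proof.
exists 1; split; first exact: (hom1 Heta).
exists 0 => n _; rewrite (hom1 (Hhom n)); exact: (ell1 (Hfree n)).
Qed.

Lemma nE_ne1 x : ~ E x -> x <> 1.
Proof. by move=> H E'; apply: H; rewrite E'; exact: E1. Qed.

Lemma conjK' (x a : L) : x * (x^-1 * a * x) * x^-1 = a.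
Proof. by rewrite !mulgA mulgV mul1g mulgK. Qed.
Lemma conjM' (x y a : L) : x * y * a * (x * y)^-1 = x * (y * a * y^-1) * x^-1.
Proof. by rewrite invgM !mulgA. Qed.

Lemma N1 (A : L -> Prop) : normalizer A 1.
Proof. by move=> a; rewrite mul1g invg1 mulg1. Qed.
Lemma NM (A : L -> Prop) x y : normalizer A x -> normalizer A y -> normalizer A (x * y).
Proof. move=> Hx Hy a; rewrite conjM' -Hx; exact: Hy. Qed.
Lemma NV (A : L -> Prop) x : normalizer A x -> normalizer A x^-1.
Proof. move=> Hx a; rewrite invgK (Hx (x^-1 * a * x)) conjK'; by []. Qed.

Lemma Nfrom (A : L -> Prop) x : (forall a, A a -> A (x * a * x^-1)) ->
  (forall a, A a -> A (x^-1 * a * x)) -> normalizer A x.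
Proof.
move=> H1 H2 a; split; first exact: H1.
by move=> /H2; rewrite -!mulgA mulKg mulgA mulgVK.
Qed.

Lemma main : let E := elliptics iA iB h eta in
  (forall u1 u2 u3 : L,
     u1 <> 1 -> u2 <> 1 -> u3 <> 1 ->
     (~ E u1 \/ ~ E u2 \/ ~ E u3) ->
     [~ u1, u2] = 1 -> [~ u1, u3] = 1 ->
     ~ E u1 /\ ~ E u2 /\ ~ E u3 /\ [~ u2, u3] = 1) /\
  (forall A : L -> Prop,
     is_subgroup A -> abelian_pred A ->
     (exists a, A a /\ a <> 1) -> (exists a, A a /\ ~ E a) ->
     (subset_pred A (centralizer A) /\
      max_abelian (centralizer A) /\
      (forall M : L -> Prop, max_abelian M -> subset_pred A M ->
         forall x, M x <-> centralizer A x) /\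
      (forall x, (centralizer A x /\ E x) <-> x = 1)) /\
     (subset_pred (centralizer A) (normalizer A) /\
      index_le2 (centralizer A) (normalizer A) /\
      (forall l : L, ~ normalizer A l ->
         forall y, ((exists c, centralizer A c /\ y = l * c * l^-1) /\ A y)
                   <-> y = 1) /\
      ((exists x, normalizer A x /\ ~ centralizer A x) ->
         exists e : L,
           normalizer A e /\ e <> 1 /\ e * e = 1 /\ E e /\
           (forall c, centralizer A c -> e * c * e^-1 = c^-1) /\
           (forall x, normalizer A x <->
                      generated (fun y => centralizer A y \/ y = e) x)))).
Proof.
move=> E0; rewrite /E0 {E0}.
split.
  move=> u1 u2 u3 H1 H2 H3 Hor C12 C13.
  have c12 : commute u1 u2 by apply/commgP/eqP.
  have c13 : commute u1 u3 by apply/commgP/eqP.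
  have key : ~ E u1 -> ~ E u1 /\ ~ E u2 /\ ~ E u3 /\ [~ u2, u3] = 1.
    move=> Hn; split => //; split; first exact: (Li _ _ Hn H2 c12).
    split; first exact: (Li _ _ Hn H3 c13).
    by apply/eqP/commgP; apply: (Lii _ _ _ Hn c12 c13).
  case: Hor => [|[]] Hn; apply: key => //.
    exact: (Li _ _ Hn H1 (commute_sym c12)).
  exact: (Li _ _ Hn H1 (commute_sym c13)).
move=> A [A1 [AM AV]] Hab _ [a0 [Aa0 Ha0]].
set C := centralizer A.
have AC : subset_pred A C by move=> x Ax a Aa; apply: Hab.
have C1 : C 1 by move=> a _; rewrite mul1g mulg1.
have CM : forall x y, C x -> C y -> C (x * y).
  move=> x y Cx Cy a Aa; by rewrite -mulgA (Cy a Aa) mulgA (Cx a Aa) mulgA.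
have CV : forall x, C x -> C x^-1.
  move=> x Cx a Aa; exact: (commute_inv (Cx a Aa)).
have Cgrp : is_subgroup C by split => //; split.
have Ca0 : forall c, C c -> commute a0 c by move=> c Cc; apply/esym/Cc.
have Cab : abelian_pred C by move=> x y Cx Cy; apply: (Lii _ _ _ Ha0 (Ca0 _ Cx) (Ca0 _ Cy)).
have CnE : forall x, C x -> x <> 1 -> ~ E x.
  by move=> x Cx Hx; apply: (Li _ _ Ha0 Hx (Ca0 _ Cx)).
have CN : subset_pred C (normalizer A).
  move=> c Cc; apply: Nfrom => a Aa.
    by rewrite (Cc a Aa) mulgK.
  by rewrite ((CV c Cc) a Aa) mulgVK.
pose Inv x := forall c, C c -> x * c * x^-1 = c^-1.
have Inv_inv : forall x, Inv x -> forall c, C c -> x^-1 * c * x = c^-1.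
  move=> x Ix c Cc; have H := Ix c^-1 (CV c Cc); rewrite invgK in H.
  by rewrite -{1}H !mulgA mulVg mul1g mulgVK.
have InvN : forall x, Inv x -> normalizer A x.
  move=> x Ix; apply: Nfrom => a Aa.
    by rewrite (Ix a (AC a Aa)); apply: AV.
  by rewrite (Inv_inv x Ix a (AC a Aa)); apply: AV.
have dich : forall x, normalizer A x -> C x \/ Inv x.
  move=> x Nx; have Ay : A (x * a0 * x^-1) := proj1 (Nx a0) Aa0.
  have cm : commute (x * a0 * x^-1) a0 by apply: Hab.
  case: (LD x a0 Ha0 cm) => [Cxa|Ei].
    left => a Aa; exact: (Lii _ _ _ Ha0 (commute_sym Cxa) (Ca0 a (AC a Aa))).
  by right => c Cc; apply: (LC x a0 c Ha0 Ei (Ca0 c Cc)).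
have InvInv : forall x y, Inv x -> Inv y -> C (x^-1 * y).
  move=> x y Ix Iy a Aa.
  have Ey : y * a = a^-1 * y by rewrite -(Iy a (AC a Aa)) mulgVK.
  have Ex : x^-1 * a^-1 = a * x^-1.
    have H := Inv_inv x Ix a^-1 (CV a (AC a Aa)); rewrite invgK in H.
    by rewrite -{2}H mulgK.
  by rewrite -mulgA Ey mulgA Ex mulgA.
split.
  split; first exact: AC.
  split.
    split; first exact: Cgrp.
    split; first exact: Cab.
    move=> M' _ HM' sub x Mx a Aa; exact: (HM' x a Mx (sub a (AC a Aa))).
  split.
    move=> M [Mgrp [Mab Mmax]] AM' x; split => [Mx | Cx].
      move=> a Aa; exact: (Mab x a Mx (AM' a Aa)).
    apply: (Mmax C Cgrp Cab) => // y My a Aa; exact: (Mab y a My (AM' a Aa)).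
  move=> x; split => [[Cx Ex]|->]; last by split; [exact: C1 | exact: E1].
  by apply: NNPP => Hx; exact: (CnE x Cx Hx Ex).
split; first exact: CN.
split.
  move=> x y z Nx Ny Nz.
  case: (dich x Nx) => [Cx|Ix]; case: (dich y Ny) => [Cy|Iy]; case: (dich z Nz) => [Cz|Iz].
  - by left; apply: CM (CV _ Cx) Cy.
  - by left; apply: CM (CV _ Cx) Cy.
  - by right; left; apply: CM (CV _ Cx) Cz.
  - by right; right; apply: InvInv.
  - by right; right; apply: CM (CV _ Cy) Cz.
  - by right; left; apply: InvInv.
  - by left; apply: InvInv.
  - by left; apply: InvInv.
split.
  move=> l Nl y; split; last first.
    move=> ->; split; last exact: A1.
    by exists 1; split; [exact: C1 | rewrite mulg1 mulgV].
  move=> [[c [Cc ->]] Ay]; apply: NNPP => Hy.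
  have Hc : c <> 1 by move=> Ec; apply: Hy; rewrite Ec mulg1 mulgV.
  have nEc := CnE c Cc Hc.
  have cm : commute (l * c * l^-1) c by apply: Cab (AC _ Ay) Cc.
  case: (LD l c nEc cm) => [Hlc|Ei]; apply: Nl.
    apply: CN => a Aa; exact: (Lii _ _ _ nEc (commute_sym Hlc) (Cc a Aa)).
  by apply: InvN => c' Cc'; exact: (LC l c c' nEc Ei (Cab c c' Cc Cc')).
move=> [x [Nx nCx]].
have Ix : Inv x by case: (dich x Nx).
have [Hxx Ex] := LR x a0 Ha0 (Ix a0 (AC a0 Aa0)).
exists x; split => //; split.
  by move=> Ex1; apply: nCx; rewrite Ex1; exact: C1.
do 3 (split => //).
move=> x'; split.
  move=> Nx'; case: (dich x' Nx') => [Cx'|Ix'].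
    by apply: gen_base; left.
  rewrite -(mulVKg x x'); apply: gen_mul.
    by apply: gen_base; right.
  by apply: gen_base; left; apply: InvInv.
elim => [z [Cz|->]| |z w _ Hz _ Hw|z _ Hz].
- exact: CN.
- exact: Nx.
- exact: N1.
- exact: NM.
- exact: NV.
Qed.

End Lim.

Theorem lemma4
  (G : groupType) (Hfg : finitely_generated G)
  (FA FB P : nat -> groupType)
  (iA : forall n, FA n -> P n) (iB : forall n, FB n -> P n)
  (Hfree : forall n, is_free_product (iA n) (iB n))
  (h : forall n, G -> P n) (Hhom : forall n, group_hom (h n))
  (Hconv : convergent iA iB h)
  (L : groupType) (eta : G -> L) (Heta : group_hom eta)
  (Hsurj : forall x : L, exists g : G, eta g = x)
  (Hker : forall g : G, eta g = 1 <-> stable_kernel h g) :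
  let E := elliptics iA iB h eta in
  (* (i) *)
  (forall u1 u2 u3 : L,
     u1 <> 1 -> u2 <> 1 -> u3 <> 1 ->
     (~ E u1 \/ ~ E u2 \/ ~ E u3) ->
     [~ u1, u2] = 1 -> [~ u1, u3] = 1 ->
     ~ E u1 /\ ~ E u2 /\ ~ E u3 /\ [~ u2, u3] = 1) /\
  (forall A : L -> Prop,
     is_subgroup A -> abelian_pred A ->
     (exists a, A a /\ a <> 1) -> (exists a, A a /\ ~ E a) ->
     (* (ii) *)
     (subset_pred A (centralizer A) /\
      max_abelian (centralizer A) /\
      (forall M : L -> Prop, max_abelian M -> subset_pred A M ->
         forall x, M x <-> centralizer A x) /\
      (forall x, (centralizer A x /\ E x) <-> x = 1)) /\
     (* (iii) *)
     (subset_pred (centralizer A) (normalizer A) /\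
      index_le2 (centralizer A) (normalizer A) /\
      (forall l : L, ~ normalizer A l ->
         forall y, ((exists c, centralizer A c /\ y = l * c * l^-1) /\ A y)
                   <-> y = 1) /\
      ((exists x, normalizer A x /\ ~ centralizer A x) ->
         exists e : L,
           normalizer A e /\ e <> 1 /\ e * e = 1 /\ E e /\
           (forall c, centralizer A c -> e * c * e^-1 = c^-1) /\
           (forall x, normalizer A x <->
                      generated (fun y => centralizer A y \/ y = e) x)))).
Proof.
exact: main.
Qed.
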